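(* Let $Y,W$ be metric spaces, $\psi\colon Y\to W$ continuous, $\rho\colon Y\to[0,\infty]$ Borel, and $\gamma\colon[0,1]\to Y$ an absolutely continuous path with $\int_\gamma\rho\,ds<\infty$. Suppose $E\subset Y$ is compact with $\mathcal{H}^1_W(\psi(E))=0$ and that $\ell(\psi\circ\gamma|_I)\le\int_{\gamma|_I}\rho\,ds$ for every closed interval $I\subset[0,1]\setminus\gamma^{-1}(E)$. Then $\ell(\psi\circ\gamma)\le\int_\gamma\rho\,ds$.
   Context: $\ell$ denotes the length of a path (supremum over partitions of sums of distances). The metric speed of a path $\gamma$ is $v_\gamma(t)=\lim_{s\to t}d(\gamma(s),\gamma(t))/|s-t|$ where it exists. A rectifiable path $\gamma\colon[a,b]\to Y$ is absolutely continuous if $v_\gamma\in L^1$ and $d(\gamma(t),\gamma(s))\le\int_s^tv_\gamma$ for $s\le t$. For absolutely continuous $\gamma$ and Borel $\rho\ge0$, $\int_\gamma\rho\,ds=\int_a^b(\rho\circ\gamma)v_\gamma\,dt$. $\mathcal{H}^1_W$ is the 1-dimensional Hausdorff measure on $W$. *)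

(* Defs.v *)
From HB Require Import structures.
From mathcomp Require Import all_boot all_order all_algebra.
From mathcomp Require Import all_classical all_reals all_analysis.
From mathcomp Require Import measurable_realfun.
Set Implicit Arguments.
Unset Strict Implicit.
Unset Printing Implicit Defensive.
Import Order.TTheory GRing.Theory Num.Theory.
Import numFieldNormedType.Exports.
Local Open Scope classical_set_scope.
Local Open Scope ring_scope.

Section Defs.
Context {R : realType}.

Definition path_length {Y : metricType R} (f : R -> Y) (a b : R) : \bar R :=
  ereal_sup [set x : \bar R | exists (n : nat) (t : nat -> R),
              [/\ t 0%N = a, t n = b,
                  (forall i, (i < n)%N -> t i <= t i.+1) &
                  x = (\sum_(0 <= i < n) mdist (f (t i)) (f (t i.+1)))%:E]].

Definition speed_filter (a b t : R) : set_system R :=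
  within [set s | a <= s <= b /\ s != t] (nbhs t).

Definition speed_quot {Y : metricType R} (f : R -> Y) (t : R) : R -> R :=
  fun s => mdist (f s) (f t) / `|s - t|.

Definition speed {Y : metricType R} (f : R -> Y) (a b t : R) : R :=
  lim (speed_quot f t @ speed_filter a b t).

Definition speed_exists {Y : metricType R} (f : R -> Y) (a b t : R) : Prop :=
  exists l : R, speed_quot f t @ speed_filter a b t --> l.

Definition abs_cont {Y : metricType R} (f : R -> Y) (a b : R) : Prop :=
  [/\ a <= b,
      {within `[a, b], continuous f},
      (path_length f a b < +oo)%E,
      {ae (@lebesgue_measure R), forall t, a <= t <= b -> speed_exists f a b t} &
      (@lebesgue_measure R).-integrable `[a, b] (fun t => (speed f a b t)%:E) /\
      forall s t, a <= s -> s <= t -> t <= b ->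
        ((mdist (f s) (f t))%:E <=
          \int[@lebesgue_measure R]_(u in `[s, t]) (speed f a b u)%:E)%E].

Definition line_int {Y : metricType R} (rho : Y -> \bar R) (f : R -> Y)
    (a b : R) : \bar R :=
  (\int[@lebesgue_measure R]_(t in `[a, b]) (rho (f t) * (speed f a b t)%:E))%E.

Definition borel_fun {Y : topologicalType} (rho : Y -> \bar R) : Prop :=
  forall B : set (\bar R), measurable B -> <<s (@open Y) >> (rho @^-1` B).

Definition diam {W : metricType R} (C : set W) : \bar R :=
  ereal_sup ([set 0%E] `|` [set (mdist x y)%:E | x in C & y in C]).

Definition hausdorff1_delta {W : metricType R} (A : set W) (delta : R) : \bar R :=
  ereal_inf [set (\sum_(0 <= n <oo) diam (C n))%E | C in
             [set C : nat -> set W | A `<=` \bigcup_n C n /\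
                                     forall n, (diam (C n) <= delta%:E)%E]].

Definition hausdorff1 {W : metricType R} (A : set W) : \bar R :=
  ereal_sup [set hausdorff1_delta A delta | delta in [set d : R | 0 < d]].

End Defs.

(* Main.v *)
Require Import Defs.
From HB Require Import structures.
From mathcomp Require Import all_boot all_order all_algebra.
From mathcomp Require Import all_classical all_reals all_analysis.
From mathcomp Require Import measurable_realfun.
From mathcomp Require Import ring lra.
Import Order.TTheory GRing.Theory Num.Theory.
Import numFieldNormedType.Exports.
Local Open Scope classical_set_scope.
Local Open Scope ring_scope.
Lemma wc (R : realType) (Y : metricType R) (g : R -> Y) (A : set R) :
  {within A, continuous g} -> forall x, A x -> forall e : R, 0 < e ->
  exists2 d : R, 0 < d & forall y, A y -> `|y - x| < d -> mdist (g x) (g y) < e.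
Proof.
move=> gc x Ax e e0.
have H := gc x.
have Hb : nbhs (g x) (ball (g x) e) by apply: nbhsx_ballx.
have := H _ Hb => /= /(nbhs_subspace_ex _ Ax) [V /nbhs_ballP [d d0 dV] UV].
exists d => // y Ay yd.
have : ((g @^-1` ball (g x) e) `&` A) y.
  rewrite UV; split => //; apply: dV; rewrite /ball /= distrC; exact: yd.
by case; rewrite /= ballEmdist.
Qed.

Lemma pre_open_meas (R : realType) (Y : metricType R) (g : R -> Y) (A : set R) (O : set Y) :
  measurable A -> {within A, continuous g} -> open O -> measurable (A `&` g @^-1` O).
Proof.
move=> mA gc oO.
pose V := [set u | exists2 d : R, 0 < d & forall y, A y -> `|y - u| < d -> O (g y)].
have oV : open V.
  rewrite openE => u [d d0 Hd]; apply/nbhs_ballP; exists (d / 2) => /=.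
    by rewrite divr_gt0.
  move=> z; rewrite /ball /= => uz; exists (d / 2); first by rewrite divr_gt0.
  move=> y Ay yz; apply: Hd => //.
  rewrite (le_lt_trans (ler_distD z y u))//.
  by rewrite [d]splitr ltrD// distrC.
have -> : A `&` g @^-1` O = A `&` V.
  apply/seteqP; split => u [Au].
    move=> /= Ogu; split => //.
    have /nbhs_ballP [e e0 eO] : nbhs (g u) O by apply: open_nbhs_nbhs.
    have [d d0 Hd] := @wc _ _ g A gc u Au e e0.
    exists d => // y Ay yu; apply: eO; rewrite ballEmdist /=; exact: Hd.
  move=> [d d0 Hd]; split => //; apply: Hd => //; by rewrite subrr normr0.
apply: measurableI => //; exact: open_measurable.
Qed.

Lemma pre_borel_meas (R : realType) (Y : metricType R) (g : R -> Y) (A : set R) (B : set Y) :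
  measurable A -> {within A, continuous g} -> <<s (@open Y) >> B -> measurable (A `&` g @^-1` B).
Proof.
move=> mA gc; apply: (smallest_sub (X := [set B : set Y | measurable (A `&` g @^-1` B)])); last first.
  by move=> O oO; exact: pre_open_meas.
split => /=.
- by rewrite preimage_set0 setI0.
- move=> C mC; have -> : A `&` g @^-1` (setT `\` C) = A `\` (A `&` g @^-1` C).
    by apply/seteqP; split => u /=; [case=> Au [_ nC]; split => // -[]|case=> Au H; split => //; split => // HC; apply: H].
  exact: measurableD.
- move=> C mC; rewrite preimage_bigcup setI_bigcupr.
  exact: bigcup_measurable.
Qed.
Lemma sf_proper (R : realType) (a b u : R) : a < b -> a <= u <= b ->
  ProperFilter (speed_filter a b u).
Proof.
move=> ab /andP[au ub]; apply: within_nbhs_proper.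
move=> B /nbhs_ballP [e e0 eB].
have e20 : 0 < e / 2 by rewrite divr_gt0.
have he2 : e / 2 < e by rewrite ltr_pdivrMr // ltr_pMr // ltr1n.
have [ub'|ub'] := ltP u b.
  pose m := Num.min (e / 2) (b - u).
  have m0 : 0 < m by rewrite lt_min e20 subr_gt0.
  exists (u + m); split.
    split; last by rewrite -subr_eq0 addrAC subrr add0r gt_eqF.
    apply/andP; split; first by rewrite (le_trans au)// lerDl ltW.
    by rewrite -lerBrDl ge_min lexx orbT.
  apply: eB; rewrite /ball /= opprD addrA subrr add0r normrN gtr0_norm //.
  by rewrite (le_lt_trans _ he2)// ge_min lexx.
have ueb : u = b by apply/eqP; rewrite eq_le ub ub'.
pose m := Num.min (e / 2) (b - a).
have m0 : 0 < m by rewrite lt_min e20 subr_gt0.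
exists (u - m); split.
  split; last by rewrite -subr_eq0 addrAC subrr add0r oppr_eq0 gt_eqF.
  apply/andP; split; last by rewrite (le_trans _ ub)// gerBl ltW.
  by rewrite lerBrDl -lerBrDr ueb ge_min lexx orbT.
apply: eB; rewrite /ball /= opprB addrCA subrr addr0 gtr0_norm //.
by rewrite (le_lt_trans _ he2)// ge_min lexx.
Qed.

Lemma speed_ge0 (R : realType) (Y : metricType R) (g : R -> Y) (a b u : R) :
  a < b -> a <= u <= b -> 0 <= speed g a b u.
Proof.
move=> ab hu; rewrite /speed /lim /lim_in.
set P := (fun l : _ => _).
have [[l Pl]|nP] := pselect (exists l, P l); last first.
  by rewrite getPN //; move=> x Px; apply: nP; exists x.
have := getPex (ex_intro _ l Pl); set l' := get _ => Hl.
have PF := @sf_proper R a b u ab hu.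
apply: (closed_cvg (fun x : R => 0 <= x) _ _ _ Hl).
  exact: closed_ge.
apply: nearW => s; by rewrite /speed_quot divr_ge0 // mdist_ge0.
Qed.

Lemma within_loc (R : realType) (A B : set R) (x d : R) : 0 < d ->
  (forall y, `|x - y| < d -> (A y <-> B y)) -> within A (nbhs x) = within B (nbhs x).
Proof.
move=> d0 HAB; rewrite /within; apply/funext => P; apply/propext.
have Hb : nbhs x (ball x d) by apply: nbhsx_ballx.
split => H; apply: (filterS2 _ _ Hb H) => y /= xy HA By.
  by apply: HA; apply/(HAB y xy).
by apply: HA; apply/(HAB y xy).
Qed.

Lemma speed_loc (R : realType) (Y : metricType R) (g : R -> Y) (a b c d x : R) :
  a <= c -> d <= b -> c < x -> x < d -> speed g c d x = speed g a b x.
Proof.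
move=> ac db cx xd; rewrite /speed /speed_filter.
rewrite (@within_loc R _ [set s | a <= s <= b /\ s != x] x (Num.min (x - c) (d - x))).
- by [].
- by rewrite lt_min !subr_gt0 cx xd.
- move=> y; rewrite lt_min => /andP[h1 h2].
  have /andP[cy yd] : c < y < d.
    move: h1 h2; rewrite !ltr_distlC => /andP[p1 _] /andP[_ p2].
    apply/andP; split; lra.
  split => -[/andP[l1 l2] yx]; split => //; apply/andP; split.
  + exact: le_trans ac (ltW cy).
  + exact: le_trans (ltW yd) db.
  + exact: ltW cy.
  + exact: ltW yd.
Qed.

Lemma geo_sum (R : realType) (eps : R) (M : nat) :
  \sum_(0 <= n < M) 2 * (eps / 2 ^+ n.+3) = eps / 2 - eps / 2 ^+ M.+1.
Proof.
elim: M => [|M IH].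
  by rewrite big_geq // expr1 subrr.
rewrite big_nat_recr //= IH.
have h2 : (2 : R) ^+ M != 0 by rewrite expf_neq0 // pnatr_eq0.
rewrite !exprS; field.
exact: h2.
Qed.

Lemma diam_ge0 (R : realType) (Z : metricType R) (C : set Z) : (0 <= diam C)%E.
Proof. by apply: ereal_sup_ubound; left. Qed.

Lemma mdist_le_diam (R : realType) (Z : metricType R) (C : set Z) x y :
  C x -> C y -> ((mdist x y)%:E <= diam C)%E.
Proof. by move=> Cx Cy; apply: ereal_sup_ubound; right; exists x => //; exists y. Qed.

Section Main.
Context (R : realType) (Y W : metricType R) (psi : Y -> W)
    (rho : Y -> \bar R) (gamma : R -> Y) (E : set Y).
Hypothesis psic : continuous psi.
Hypothesis rho0 : forall y, (0 <= rho y)%E.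
Hypothesis rhoB : borel_fun rho.
Hypothesis gac : abs_cont gamma 0 1.
Hypothesis Ec : compact E.
Hypothesis HE : hausdorff1 (psi @` E) = 0%E.
Hypothesis Hgood : forall c d : R, 0 <= c -> c <= d -> d <= 1 ->
     (forall t, c <= t <= d -> ~ E (gamma t)) ->
     (path_length (psi \o gamma) c d <= line_int rho gamma c d)%E.

Let h (u : R) : \bar R := (rho (gamma u) * (speed gamma 0 1 u)%:E)%E.
Let F (s t : R) : \bar R := (\int[@lebesgue_measure R]_(u in `[s, t]) h u)%E.

Let gcont : {within `[0, 1], continuous gamma}.
Proof. by case: gac. Qed.

Lemma rg_meas : measurable_fun `[(0:R), 1] (fun u => rho (gamma u)).
Proof.
move=> _ B mB.
apply: (@pre_borel_meas R Y gamma `[(0:R), 1] (rho @^-1` B)) => //; exact: rhoB.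
Qed.

Lemma v_meas : measurable_fun `[(0:R), 1] (fun u => (speed gamma 0 1 u)%:E).
Proof. by case: gac => _ _ _ _ [/measurable_int]. Qed.

Lemma h_meas : measurable_fun `[(0:R), 1] h.
Proof. exact: emeasurable_funM rg_meas v_meas. Qed.

Lemma h_ge0 u : 0 <= u <= 1 -> (0 <= h u)%E.
Proof. by move=> hu; rewrite mule_ge0 // lee_fin speed_ge0. Qed.

Lemma itv_sub01 {s t} : 0 <= s -> t <= 1 -> `[s, t] `<=` `[(0:R), 1].
Proof.
move=> s0 t1 x; rewrite /= !in_itv /= => /andP[sx xt].
by apply/andP; split; [exact: le_trans s0 sx|exact: le_trans xt t1].
Qed.

Lemma oo_sub01 {s t} : 0 <= s -> t <= 1 -> `]s, t[ `<=` `[(0:R), 1].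
Proof.
move=> s0 t1 x; rewrite /= !in_itv /= => /andP[sx xt].
by apply/andP; split; [exact: le_trans s0 (ltW sx)|exact: le_trans (ltW xt) t1].
Qed.

Lemma F_oo s t : 0 <= s -> t <= 1 ->
  F s t = (\int[@lebesgue_measure R]_(u in `]s, t[) h u)%E.
Proof.
move=> s0 t1; rewrite /F integral_itv_bndoo //.
apply: measurable_funS h_meas => //; exact: oo_sub01.
Qed.

Lemma F_ge0 s t : 0 <= s -> t <= 1 -> (0 <= F s t)%E.
Proof.
move=> s0 t1; apply: integral_ge0 => x /(itv_sub01 s0 t1) /=.
by rewrite in_itv /= => /h_ge0.
Qed.

Lemma F_super s a b t : 0 <= s -> s <= a -> a <= b -> b <= t -> t <= 1 ->
  (F s a + F b t <= F s t)%E.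
Proof.
move=> s0 sa ab bt t1.
have a1 : a <= 1 by rewrite (le_trans ab) // (le_trans bt).
have b0 : 0 <= b by rewrite (le_trans s0) // (le_trans sa).
rewrite !F_oo //.
have mst : measurable_fun `]s, t[ h.
  apply: measurable_funS h_meas => //; exact: oo_sub01.
rewrite -ge0_integral_setU //.
- apply: ge0_subset_integral => //.
  + by apply: measurableU.
  + move=> x xst; have := oo_sub01 s0 t1 x xst; rewrite /= in_itv /=; exact: h_ge0.
  + move=> x [] /=; rewrite !in_itv /= => /andP[h1 h2]; apply/andP; split => //.
    * exact: lt_le_trans h2 (le_trans ab bt).
    * exact: le_lt_trans (le_trans sa ab) h1.
- apply: measurable_funS mst => //.
  move=> x [] /=; rewrite !in_itv /= => /andP[h1 h2]; apply/andP; split => //.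
  + exact: lt_le_trans h2 (le_trans ab bt).
  + exact: le_lt_trans (le_trans sa ab) h1.
- move=> x [] xI.
    by have := oo_sub01 s0 a1 x xI; rewrite /= in_itv /=; exact: h_ge0.
  by have := oo_sub01 b0 t1 x xI; rewrite /= in_itv /=; exact: h_ge0.
- rewrite disj_set2E; apply/eqP/seteqP; split => x //= [].
  rewrite !in_itv /= => /andP[_ xa] /andP[bx _].
  by have := lt_trans (le_lt_trans ab bx) xa; rewrite ltxx.
Qed.

Lemma line_eq c d : 0 <= c -> c <= d -> d <= 1 -> line_int rho gamma c d = F c d.
Proof.
move=> c0 cd d1.
have hcd : {in `]c, d[, h =1 (fun u => (rho (gamma u) * (speed gamma c d u)%:E)%E)}.
  move=> x; rewrite inE /= => /andP[cx xd].
  by rewrite /h (@speed_loc R Y gamma 0 1 c d x).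
have mh : measurable_fun `]c, d[ h.
  apply: measurable_funS h_meas => //; exact: oo_sub01.
rewrite F_oo // /line_int integral_itv_bndoo //; last first.
  apply: (eq_measurable_fun h) => // x; rewrite inE /= => xI; apply: hcd; rewrite inE; exact: xI.
apply: eq_integral => x; rewrite inE /= => xI; rewrite hcd //; rewrite inE; exact: xI.
Qed.

Lemma path_length_ge (Z : metricType R) (f : R -> Z) c d : c <= d ->
  ((mdist (f c) (f d))%:E <= path_length f c d)%E.
Proof.
move=> cd; apply: ereal_sup_ubound => /=.
exists 1%N, (fun i => if i == 0%N then c else d); split => //.
  by move=> [|i] //.
by rewrite big_nat1.
Qed.

Lemma good c d : 0 <= c -> c <= d -> d <= 1 ->
  (forall t, c <= t <= d -> ~ E (gamma t)) ->
  ((mdist (psi (gamma c)) (psi (gamma d)))%:E <= F c d)%E.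
Proof.
move=> c0 cd d1 HE'; rewrite -line_eq //.
apply: le_trans (Hgood _ _ c0 cd d1 HE'); rewrite /=.
exact: (@path_length_ge W (psi \o gamma) c d cd).
Qed.

Lemma mono_nat_R (n : nat) (t : nat -> R) :
  (forall i, (i < n)%N -> t i <= t i.+1) ->
  forall i j, (i <= j)%N -> (j <= n)%N -> t i <= t j.
Proof.
move=> Ht i j; elim: j => [|j IH] ij jn.
  by move: ij; rewrite leqn0 => /eqP ->.
move: ij; rewrite leq_eqVlt => /orP[/eqP -> //|]; rewrite ltnS => ij.
apply: le_trans (IH ij (ltnW jn)) (Ht _ jn).
Qed.

Lemma final_step :
  (forall s t, 0 <= s -> s <= t -> t <= 1 ->
     ((mdist (psi (gamma s)) (psi (gamma t)))%:E <= F s t)%E) ->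
  (path_length (psi \o gamma) 0 1 <= line_int rho gamma 0 1)%E.
Proof.
move=> Hd; rewrite line_eq //; apply: ub_ereal_sup => x [n [t [t0 tn Ht ->]]].
have mo := @mono_nat_R n t Ht.
have t01 : forall i, (i <= n)%N -> 0 <= t i /\ t i <= 1.
  move=> i iH; split.
    by rewrite -t0; apply: mo.
  by rewrite -tn; apply: mo.
suff : forall k, (k <= n)%N ->
  ((\sum_(0 <= i < k) mdist ((psi \o gamma) (t i)) ((psi \o gamma) (t i.+1)))%:E
     <= F 0 (t k))%E by move=> /(_ n (leqnn n)); rewrite tn.
elim => [|k IH] kn.
  by rewrite big_geq // t0; apply: F_ge0.
rewrite big_nat_recr //= EFinD.
have [tk0 tk1] := t01 k (ltnW kn).
have [tk0' tk1'] := t01 k.+1 kn.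
apply: le_trans (@F_super 0 (t k) (t k) (t k.+1) (lexx 0) tk0 (lexx _) (Ht k kn) tk1').
apply: leeD; first exact: IH (ltnW kn).
exact: Hd _ _ tk0 (Ht k kn) tk1'.
Qed.

Lemma sig_wc x : 0 <= x <= 1 -> forall e : R, 0 < e ->
  exists2 d : R, 0 < d & forall y, 0 <= y <= 1 -> `|y - x| < d ->
    mdist (psi (gamma x)) (psi (gamma y)) < e.
Proof.
move=> hx e e0.
have Hb : nbhs (psi (gamma x)) (ball (psi (gamma x)) e) by apply: nbhsx_ballx.
have /nbhs_ballP [e' e'0 He'] := psic (gamma x) _ Hb.
have hx' : `[(0:R), 1]%classic x by rewrite /= in_itv /=.
have [d d0 Hd] := @wc R Y gamma `[(0:R), 1] gcont x hx' e' e'0.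
exists d => // y hy yx.
have hy' : `[(0:R), 1]%classic y by rewrite /= in_itv /=.
have := He' (gamma y); rewrite /= ballEmdist /= => H.
have := H (Hd y hy' yx); by rewrite ballEmdist.
Qed.

Lemma sig_open x (O : set W) : 0 <= x <= 1 -> open O -> O (psi (gamma x)) ->
  exists2 d : R, 0 < d & forall y, 0 <= y <= 1 -> `|y - x| < d -> O (psi (gamma y)).
Proof.
move=> hx oO Ox.
have /nbhs_ballP [e e0 eO] : nbhs (psi (gamma x)) O by apply: open_nbhs_nbhs.
have [d d0 Hd] := @sig_wc x hx e e0.
exists d => // y hy yx; apply: eO; rewrite ballEmdist /=; exact: Hd.
Qed.

Lemma E_closed_pt a : 0 <= a <= 1 ->
  (forall d : R, 0 < d -> exists u, [/\ 0 <= u <= 1, `|u - a| < d & E (gamma u)]) ->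
  E (gamma a).
Proof.
move=> ha H.
apply: (compact_closed (@metric_hausdorff R Y) Ec).
move=> B /nbhs_ballP [e e0 eB].
have ha' : `[(0:R), 1]%classic a by rewrite /= in_itv /=.
have [d d0 Hd] := @wc R Y gamma `[(0:R), 1] gcont a ha' e e0.
have [u [hu ua Eu]] := H d d0.
exists (gamma u); split => //; apply: eB; rewrite ballEmdist /=; apply: Hd => //.
Qed.

Lemma cover_small (eps : R) : 0 < eps -> exists (U : nat -> set W) (w : nat -> R) (M : nat),
  [/\ (forall n, open (U n)), (forall n, 0 <= w n),
      (forall n y z, U n y -> U n z -> mdist y z <= w n),
      (forall e, E e -> exists2 n, (n < M)%N & U n (psi e)) &
      \sum_(0 <= n < M) w n <= eps].
Proof.
move=> e0.
have h1 : (hausdorff1_delta (psi @` E) 1 <= 0)%E.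
  rewrite -HE; apply: ereal_sup_ubound; exists 1 => //=.
have : (hausdorff1_delta (psi @` E) 1 < (eps / 2)%:E)%E.
  by apply: le_lt_trans h1 _; rewrite lte_fin divr_gt0.
move=> /ereal_inf_lt [x0 [C [Ccov Cdiam] <-] Clt].
pose eta n : R := eps / 2 ^+ n.+3.
have eta0 n : 0 < eta n by rewrite divr_gt0 // exprn_gt0.
pose U n := [set y | exists2 x, C n x & mdist x y < eta n].
have dfin n : diam (C n) \is a fin_num.
  rewrite ge0_fin_numE ?diam_ge0 //; apply: le_lt_trans (Cdiam n) _; exact: ltry.
pose w n := fine (diam (C n)) + 2 * eta n.
have Uo n : open (U n).
  rewrite openE => y [x Cx xy]; apply/nbhs_ballP.
  exists (eta n - mdist x y); first by rewrite /= subr_gt0.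
  move=> z; rewrite ballEmdist /= => yz; exists x => //.
  have := metric_triangle x y z; lra.
have w0 n : 0 <= w n.
  rewrite /w addr_ge0 //; last by rewrite mulr_ge0 // ltW.
  by rewrite -lee_fin fineK // diam_ge0.
have Uw : forall k y z, U k y -> U k z -> mdist y z <= w k.
  move=> n y z.
  move=> [x Cx xy] [x' Cx' x'z].
  have hd : mdist x x' <= fine (diam (C n)) by rewrite -lee_fin fineK // mdist_le_diam.
  have t1 := metric_triangle y x z; have t2 := metric_triangle x x' z.
  rewrite (metric_sym y x) in t1; rewrite /w; lra.
have cpt : compact (psi @` E).
  apply: continuous_compact => //; exact: continuous_subspaceT.
have [M HM] : exists M : nat, forall e, E e -> exists2 n, (n < M)%N & U n (psi e).
  have nc := (compact_near_coveringP (psi @` E)).1 cpt.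
  have Hc : forall x, (psi @` E) x ->
      \forall x' \near x & i \near \oo, exists2 n, (n < i)%N & U n x'.
    move=> _ [e Ee <-].
    have /Ccov [n _ Cn] : (psi @` E) (psi e) by exists e.
    have Un : U n (psi e) by exists (psi e) => //; rewrite mdistxx.
    exists (U n, [set M | (n < M)%N]); first split => /=.
    - by apply: open_nbhs_nbhs; split.
    - by exists n.+1 => //.
    by move=> [y M] [/= Uy nM]; exists n.
  have [N _ HN] := nc _ eventually (fun (M : nat) y => exists2 n, (n < M)%N & U n y) _ Hc.
  exists N => e Ee; apply: (HN N (leqnn N)); by exists e.
exists U, w, M; split => //.
rewrite big_split /=.
have -> : eps = eps / 2 + eps / 2 by rewrite -splitr.
apply: lerD; last first.
  by rewrite geo_sum lerBlDr lerDl divr_ge0 ?exprn_ge0 // ltW.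
rewrite -lee_fin -sumEFin.
under eq_bigr do rewrite fineK //.
apply: le_trans (ltW Clt).
have := nneseries_lim_ge (u_ := fun n => diam (C n)) (P := xpredT) (m := 0%N) M (fun n _ _ => @diam_ge0 R W (C n)).
by [].
Qed.

Section Core.
Variables (U : nat -> set W) (w : nat -> R).
Hypothesis Uo : forall n, open (U n).
Hypothesis w0 : forall n, 0 <= w n.
Hypothesis Uw : forall n y z, U n y -> U n z -> mdist y z <= w n.

Definition cov (l : seq nat) (s t : R) := forall u, s <= u <= t -> E (gamma u) ->
  exists2 n, n \in l & U n (psi (gamma u)).

Definition Qp (l : seq nat) := forall s t, 0 <= s -> s <= t -> t <= 1 -> cov l s t ->
  ((mdist (psi (gamma s)) (psi (gamma t)))%:E <= F s t + (\sum_(n <- l) w n)%:E)%E.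

Lemma Sw0 l : 0 <= \sum_(n <- l) w n.
Proof. by apply: sumr_ge0 => i _; exact: w0. Qed.

Lemma core_step l : (forall l', (size l' < size l)%N -> Qp l') -> Qp l.
Proof.
move=> IH s t s0 st t1 cv.
pose S := [set u | s <= u <= t /\ E (gamma u)].
have [[u0 Su0]|nS] := pselect (exists u, S u); last first.
  apply: le_trans (@good s t s0 st t1 _) _.
    by move=> u hu Eu; apply: nS; exists u; split.
  by rewrite leeDl // lee_fin Sw0.
have hinfS : has_inf S.
  split; first by exists u0.
  by exists s => u [/andP[]].
pose a := inf S.
have sa : s <= a by apply: lb_le_inf; [exists u0 | move=> u [/andP[]]].
have au0 : a <= u0 := ge_inf hinfS.2 Su0.
have u0t : u0 <= t by case: Su0 => /andP[].
have at_ : a <= t := le_trans au0 u0t.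
have a01 : 0 <= a <= 1 by apply/andP; split; [exact: le_trans s0 sa|exact: le_trans at_ t1].
have Ea : E (gamma a).
  apply: E_closed_pt => // d d0.
  have [u Su ua] := inf_adherent d0 hinfS.
  have au : a <= u := ge_inf hinfS.2 Su.
  case: Su => /andP[su ut] Eu.
  exists u; split => //.
    by apply/andP; split; [exact: le_trans s0 su|exact: le_trans ut t1].
  by rewrite ger0_norm ?subr_ge0 // ltrBlDl.
have [n nl Una] := cv a (introT andP (conj sa at_)) Ea.
have [d1 d10 Hd1] := @sig_open a (U n) a01 (Uo n) Una.
pose a' := Num.max s (a - d1 / 2).
have sa' : s <= a' by rewrite /a' le_max lexx.
have a'a : a' <= a.
  rewrite /a' ge_max sa /=; lra.
have a'01 : 0 <= a' <= 1.
  by apply/andP; split; [exact: le_trans s0 sa'|exact: le_trans a'a (le_trans at_ t1)].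
have Ua' : U n (psi (gamma a')).
  apply: Hd1 => //; rewrite ler0_norm ?subr_le0 //.
  have : a - d1 / 2 <= a' by rewrite /a' le_max lexx orbT.
  lra.
have H1 : ((mdist (psi (gamma s)) (psi (gamma a')))%:E <= F s a')%E.
  have [sa_lt|as_] := ltP s a.
    have a'lt : a' < a by rewrite /a' gt_max sa_lt /=; lra.
    apply: (@good s a' s0 sa' (le_trans a'a (le_trans at_ t1))) => u /andP[su ua'] Eu.
    have Su : S u.
      split => //; apply/andP; split => //.
      exact: le_trans ua' (le_trans a'a at_).
    have := ge_inf hinfS.2 Su; rewrite -/a => au.
    lra.
  have -> : a' = s by apply: le_anti; rewrite sa' andbT (le_trans a'a as_).
  by rewrite mdistxx; apply: (@F_ge0 s s s0 (le_trans st t1)).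
pose T := [set u | s <= u <= t /\ U n (psi (gamma u))].
have Ta : T a by split => //; apply/andP; split.
have hsupT : has_sup T.
  split; first by exists a.
  by exists t => u [/andP[]].
pose b := sup T.
have ab : a <= b := sup_upper_bound hsupT Ta.
have bt : b <= t by apply: ge_sup; [exists a | move=> u [/andP[]]].
have b01 : 0 <= b <= 1.
  by apply/andP; split; [exact: le_trans s0 (le_trans sa ab)|exact: le_trans bt t1].
have H2 : mdist (psi (gamma a')) (psi (gamma b)) <= w n.
  rewrite leNgt; apply/negP => Hlt.
  have e0 : 0 < mdist (psi (gamma a')) (psi (gamma b)) - w n by rewrite subr_gt0.
  have [d2 d20 Hd2] := @sig_wc b b01 _ e0.
  have [u Tu bu] := sup_adherent d20 hsupT.
  have ub : u <= b := sup_upper_bound hsupT Tu.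
  case: Tu => /andP[su ut] Uu.
  have u01 : 0 <= u <= 1.
    by apply/andP; split; [exact: le_trans s0 su|exact: le_trans ut t1].
  have h1 := Hd2 u u01.
  have h2 := Uw _ _ _ Ua' Uu.
  have h3 := metric_triangle (psi (gamma a')) (psi (gamma u)) (psi (gamma b)).
  rewrite (metric_sym (psi (gamma u))) in h3.
  have h4 : `|u - b| < d2.
    rewrite ler0_norm ?subr_le0 //; rewrite -/b in bu; lra.
  have := h1 h4; lra.
have H3 : ((mdist (psi (gamma b)) (psi (gamma t)))%:E <=
           F b t + (\sum_(m <- rem n l) w m)%:E)%E.
  have [bt_lt|tb] := ltP b t; last first.
    have -> : b = t by apply: le_anti; rewrite bt tb.
    rewrite mdistxx; apply: adde_ge0; first exact: (@F_ge0 t t (le_trans s0 st) t1).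
    by rewrite lee_fin Sw0.
  apply: IH => //.
  - rewrite size_rem // ltn_predL lt0n size_eq0; apply/eqP => l0; by rewrite l0 in nl.
  - by case/andP: b01.
  move=> u /andP[bu ut] Eu.
  have [m ml Um] := cv u (introT andP (conj (le_trans sa (le_trans ab bu)) ut)) Eu.
  exists m => //.
  have mn : m != n.
    apply/eqP => mn; subst m.
    have [bu'|ub] := ltP b u.
      have Tu : T u by split => //; apply/andP; split => //; exact: le_trans sa (le_trans ab (ltW bu')).
      have := sup_upper_bound hsupT Tu; rewrite -/b => ub; lra.
    have ueq : u = b by apply: le_anti; rewrite ub bu.
    rewrite ueq in Um.
    have [d3 d30 Hd3] := @sig_open b (U n) b01 (Uo n) Um.
    pose y := Num.min t (b + d3 / 2).
    have by_ : b < y by rewrite /y lt_min bt_lt /=; lra.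
    have yt : y <= t by rewrite /y ge_min lexx.
    have Ty : T y.
      split.
        apply/andP; split => //; exact: le_trans sa (le_trans ab (ltW by_)).
      apply: Hd3.
        apply/andP; split; [exact: le_trans s0 (le_trans sa (le_trans ab (ltW by_)))|exact: le_trans yt t1].
      rewrite gtr0_norm ?subr_gt0 //.
      have : y <= b + d3 / 2 by rewrite /y ge_min lexx orbT.
      lra.
    have := sup_upper_bound hsupT Ty; rewrite -/b => yb; lra.
  by move: ml; rewrite (perm_mem (perm_to_rem nl)) inE (negbTE mn).
have tri : mdist (psi (gamma s)) (psi (gamma t)) <=
    mdist (psi (gamma s)) (psi (gamma a')) + w n + mdist (psi (gamma b)) (psi (gamma t)).
  have t1' := metric_triangle (psi (gamma s)) (psi (gamma a')) (psi (gamma t)).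
  have t2' := metric_triangle (psi (gamma a')) (psi (gamma b)) (psi (gamma t)).
  lra.
rewrite (big_rem n) //= EFinD.
apply: le_trans (_ : _ <= (mdist (psi (gamma s)) (psi (gamma a')))%:E + (w n)%:E
   + (mdist (psi (gamma b)) (psi (gamma t)))%:E)%E _.
  by rewrite -!EFinD lee_fin.
apply: le_trans (_ : _ <= F s a' + (w n)%:E + (F b t + (\sum_(m <- rem n l) w m)%:E))%E _.
  by apply: leeD => //; apply: leeD.
rewrite addeACA; apply: leeD => //.
apply: F_super => //; exact: le_trans a'a ab.
Qed.

Lemma core_all k : forall l, (size l <= k)%N -> Qp l.
Proof.
elim: k => [|k IH] l hl; apply: core_step => l' hl'.
  by have := leq_trans hl' hl.
by apply: IH; rewrite -ltnS (leq_trans hl').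
Qed.

End Core.

Lemma dist_le s t : 0 <= s -> s <= t -> t <= 1 ->
  ((mdist (psi (gamma s)) (psi (gamma t)))%:E <= F s t)%E.
Proof.
move=> s0 st t1; apply/lee_addgt0Pr => eps e0.
have [U [w [M [Uo w0 Uw Hcov Hsum]]]] := @cover_small eps e0.
have := @core_all U w Uo w0 Uw _ (index_iota 0 M) (leqnn _) s t s0 st t1.
move=> H; apply: le_trans (H _) _.
  move=> u _ Eu; have [n nM Un] := Hcov _ Eu.
  by exists n => //; rewrite mem_index_iota.
by apply: leeD => //; rewrite lee_fin.
Qed.

Theorem main_thm : (path_length (psi \o gamma) 0 1 <= line_int rho gamma 0 1)%E.
Proof. exact: final_step dist_le. Qed.


End Main.

Theorem lemma2p2 (R : realType) (Y W : metricType R) (psi : Y -> W)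
    (rho : Y -> \bar R) (gamma : R -> Y) (E : set Y) :
  continuous psi ->
  (forall y, 0 <= rho y)%E ->
  borel_fun rho ->
  abs_cont gamma 0 1 ->
  (line_int rho gamma 0 1 < +oo)%E ->
  compact E ->
  hausdorff1 (psi @` E) = 0%E ->
  (forall c d : R, 0 <= c -> c <= d -> d <= 1 ->
     (forall t, c <= t <= d -> ~ E (gamma t)) ->
     (path_length (psi \o gamma) c d <= line_int rho gamma c d)%E) ->
  (path_length (psi \o gamma) 0 1 <= line_int rho gamma 0 1)%E.
Proof.
move=> psic rho0 rhoB gac _ Ec HE Hgood.
exact: (@main_thm R Y W psi rho gamma E psic rho0 rhoB gac Ec HE Hgood).
Qed.
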